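(* For any step size $\eta\le4/\rho^2$, any $Z\in\mathbb{R}^{m\times d}$ and any $t$, \[ \|W_t-Z\|^2+2\eta\sum_{i<t}\widehat{\mathcal R}^{(i)}(W_{i+1})\le\|W_0-Z\|^2+2\eta\sum_{i<t}\widehat{\mathcal R}^{(i)}(Z). \]
   Context: Sample $((x_k,y_k))_{k=1}^n$ with $\|x_k\|\le1$, $y_k\in\{\pm1\}$. $\ell(r)=\ln(1+e^{-r})$. Network of width $m$, temperature $\rho>0$, signs $a_j\in\{\pm1\}$: for $W$ with rows $w_j^\top$, $f(x;W)=\frac{\rho}{\sqrt m}\sum_ja_j\max\{0,w_j^\top x\}$, $\nabla f(x;W)=\frac{\rho}{\sqrt m}\sum_ja_j\mathbf 1[w_j^\top x\ge0]e_jx^\top$. $\widehat{\mathcal R}(W)=\frac1n\sum_k\ell(y_kf(x_k;W))$, $\nabla\widehat{\mathcal R}(W)=\frac1n\sum_k\ell'(y_kf(x_k;W))y_k\nabla f(x_k;W)$. Gradient descent from the initialization $W_0$: $W_{i+1}=W_i-\eta\nabla\widehat{\mathcal R}(W_i)$. $\widehat{\mathcal R}^{(i)}(V)=\frac1n\sum_k\ell(y_k\langle\nabla f(x_k;W_i),V\rangle)$ with $\langle A,B\rangle=\mathrm{tr}(A^\top B)$. $\|\cdot\|$ Frobenius norm. *)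

(* Defs.v *)
From HB Require Import structures.
From mathcomp Require Import all_boot all_order all_algebra.
From mathcomp Require Import all_classical all_reals all_analysis.
Set Implicit Arguments. Unset Strict Implicit. Unset Printing Implicit Defensive.
Import Order.TTheory GRing.Theory Num.Theory.
Local Open Scope ring_scope.

Section Defs.
Variable R : realType.

Definition logloss (r : R) : R := ln (1 + expR (- r)).
Definition logloss' (r : R) : R := - (expR (- r) / (1 + expR (- r))).

Definition frob_inner (m d : nat) (A B : 'M[R]_(m, d)) : R := \tr (A^T *m B).
Definition frob (m d : nat) (A : 'M[R]_(m, d)) : R :=
  Num.sqrt (\sum_(i < m) \sum_(j < d) A i j ^+ 2).

Variables (n m d : nat) (rho : R) (a : 'I_m -> R).

Definition preact (W : 'M[R]_(m, d)) (x : 'cV[R]_d) (j : 'I_m) : R :=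
  \sum_(l < d) W j l * x l ord0.

Definition net (x : 'cV[R]_d) (W : 'M[R]_(m, d)) : R :=
  rho / Num.sqrt m%:R * \sum_(j < m) a j * Num.max 0 (preact W x j).

Definition net_grad (x : 'cV[R]_d) (W : 'M[R]_(m, d)) : 'M[R]_(m, d) :=
  \matrix_(j < m, l < d)
    (rho / Num.sqrt m%:R * (a j * ((if 0 <= preact W x j then 1 else 0) * x l ord0))).

Variables (xs : 'I_n -> 'cV[R]_d) (ys : 'I_n -> R).

Definition emp_risk (W : 'M[R]_(m, d)) : R :=
  n%:R^-1 * \sum_(k < n) logloss (ys k * net (xs k) W).

Definition emp_risk_grad (W : 'M[R]_(m, d)) : 'M[R]_(m, d) :=
  n%:R^-1 *: \sum_(k < n) ((logloss' (ys k * net (xs k) W) * ys k) *: net_grad (xs k) W).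

Fixpoint gd (eta : R) (W0 : 'M[R]_(m, d)) (i : nat) : 'M[R]_(m, d) :=
  match i with
  | 0 => W0
  | i'.+1 => gd eta W0 i' - eta *: emp_risk_grad (gd eta W0 i')
  end.

Definition lin_risk (eta : R) (W0 : 'M[R]_(m, d)) (i : nat) (V : 'M[R]_(m, d)) : R :=
  n%:R^-1 * \sum_(k < n) logloss (ys k * frob_inner (net_grad (xs k) (gd eta W0 i)) V).

End Defs.

(* Main.v *)
Require Import Defs.
From HB Require Import structures.
From mathcomp Require Import all_boot all_order all_algebra.
From mathcomp Require Import all_classical all_reals all_analysis.
From mathcomp Require Import ring lra.
Import Order.TTheory GRing.Theory Num.Theory.
Import numFieldNormedType.Exports.
Local Open Scope classical_set_scope.
Local Open Scope ring_scope.

Section An.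
Variable R : realType.

Lemma is_derive_ext (f g : R -> R) (x df dg : R) : f = g -> df = dg ->
  is_derive x 1 f df -> is_derive x 1 g dg.
Proof. by move=> -> ->. Qed.

Lemma d_inner (s : R) : is_derive s 1 (fun t : R => 1 + expR (- t)) (- expR (- s)).
Proof.
have h1 : is_derive s 1 (expR \o -%R) (expR (- s) * (-1)).
  apply: is_derive1_comp.
have h2 := is_deriveD (is_derive_cst (1:R) s 1) h1.
rewrite (_ : (fun t => _) = (cst 1 + (expR \o -%R))); last by apply/funext.
rewrite (_ : - expR (-s) = 0 + expR (-s) * -1); [exact: h2 | by rewrite add0r mulrN1].
Qed.

Lemma d_logloss (s : R) : is_derive s 1 (@logloss R) (logloss' s).
Proof.
have hp : 0 < 1 + expR (- s) by rewrite ltr_wpDr ?expR_ge0.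
have h := @is_derive1_comp R (@ln R) (fun t => 1 + expR (- t)) s _ _ (is_derive1_ln hp) (d_inner s).
rewrite (_ : logloss' s = (1 + expR (- s))^-1 * - expR (- s)); first exact: h.
by rewrite /logloss' mulrN mulrC.
Qed.

Lemma d_quad (c e s : R) : is_derive s 1 (fun t : R => c * t + e * (t * t)) (c + e * (s + s)).
Proof.
have hi : is_derive s (1:R) id (1:R) by exact: is_derive_id.
have h1 := is_deriveM (is_derive_cst c s 1) hi.
have h2 := is_deriveM (is_derive_cst e s 1) (is_deriveM hi hi).
have h3 := is_deriveD h1 h2.
move: h3; apply: is_derive_ext; first by apply/funext.
rewrite /cst /= !scaler0 !addr0 /GRing.scale /= !mulr1. ring.
Qed.

Lemma d_logloss' (s : R) : is_derive s 1 (@logloss' R) (expR (- s) / (1 + expR (- s)) ^+ 2).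
Proof.
have hp : 0 < 1 + expR (- s) by rewrite ltr_wpDr ?expR_ge0.
have h := @is_deriveV R (fun t => 1 + expR (- t)) s _ _ (lt0r_neq0 hp) (d_inner s).
have h2 := is_deriveB h (is_derive_cst (1:R) s 1).
move: h2; apply: is_derive_ext.
  apply/funext => t /=. rewrite /logloss' /cst.
  have ht : 0 < 1 + expR (- t) by rewrite ltr_wpDr ?expR_ge0.
  change ((1 + expR (- t))^-1 - 1 = - (expR (- t) / (1 + expR (- t)))). field. by rewrite lt0r_neq0.
rewrite subr0 /GRing.scale /= mulNr mulrN opprK mulrC //.
Qed.

Lemma cont_of_der (f df : R -> R) (a b : R) : (forall x : R, is_derive x 1 f (df x)) -> {within `[a, b], continuous f}.
Proof.
move=> hd; apply/continuous_subspaceT=> r.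
case: (hd r) => /derivable1_diffP H _; exact: differentiable_continuous.
Qed.

Lemma ndecr_der (f df : R -> R) : (forall x : R, is_derive x 1 f (df x)) -> (forall x, 0 <= df x) ->
  forall x y, x <= y -> f x <= f y.
Proof.
move=> hd hp x y xy.
have [c _ h] := @MVT_segment R f df x y xy (fun z _ => hd z) (@cont_of_der _ _ _ _ hd).
by rewrite -subr_ge0 h mulr_ge0 // subr_ge0.
Qed.

Lemma min_der (f df : R -> R) r : (forall x : R, is_derive x 1 f (df x)) ->
  (forall x, r <= x -> 0 <= df x) -> (forall x, x <= r -> df x <= 0) ->
  forall s, f r <= f s.
Proof.
move=> hd hp hn s. case: (lerP r s) => rs.
  have [c cI h] := @MVT_segment R f df r s rs (fun z _ => hd z) (@cont_of_der _ _ _ _ hd).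
  rewrite -subr_ge0 h mulr_ge0 // ?subr_ge0 //. apply: hp. by rewrite (itvP cI).
have sr := ltW rs.
have [c cI h] := @MVT_segment R f df s r sr (fun z _ => hd z) (@cont_of_der _ _ _ _ hd).
rewrite -subr_le0 h mulr_le0_ge0 // ?subr_ge0 //. apply: hn. by rewrite (itvP cI).
Qed.


Lemma d_G (c e s : R) : is_derive s 1 (fun t => c*t + e*(t*t) - logloss t) (c + e*(s+s) - logloss' s).
Proof.
have h := is_deriveB (d_quad c e s) (d_logloss s).
by move: h; apply: is_derive_ext.
Qed.

Lemma d_H (c e s : R) : is_derive s 1 (fun t => logloss t - (c*t + e*(t*t))) (logloss' s - (c + e*(s+s))).
Proof.
have h := is_deriveB (d_logloss s) (d_quad c e s).
by move: h; apply: is_derive_ext.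
Qed.

Lemma l'_mono (x y : R) : x <= y -> logloss' x <= logloss' y.
Proof.
apply: (@ndecr_der _ (fun s => expR (- s) / (1 + expR (- s)) ^+ 2)).
  exact: d_logloss'.
move=> s; by rewrite divr_ge0 ?expR_ge0 ?exprn_ge0 // addr_ge0 ?expR_ge0.
Qed.

Lemma ll_convex (r s : R) : logloss r + logloss' r * (s - r) <= logloss s.
Proof.
have h := @min_der (fun t => logloss t - (logloss' r * t + 0 * (t * t)))
   (fun s => logloss' s - (logloss' r + 0 * (s + s))) r (d_H _ _).
have h2 := h _ _ s; clear h.
rewrite /= !mul0r !addr0 in h2.
rewrite -subr_ge0 (_ : _ - _ = logloss s - logloss' r * s - (logloss r - logloss' r * r)); last by ring.
rewrite subr_ge0; apply: h2.
- move=> x rx. rewrite mul0r addr0 subr_ge0. exact: l'_mono.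
- move=> x rx. rewrite mul0r addr0 subr_le0. exact: l'_mono.
Qed.

Lemma l'_lip (x y : R) : x <= y -> logloss' y - logloss' x <= (y - x) / 4.
Proof.
move=> xy.
have hd : forall s : R, is_derive s 1 (fun t => 4^-1 * t + 0 * (t * t) - logloss' t)
   (4^-1 + 0 * (s + s) - expR (- s) / (1 + expR (- s)) ^+ 2).
  move=> s; have h := is_deriveB (d_quad 4^-1 0 s) (d_logloss' s).
  by move: h; apply: is_derive_ext.
have := @ndecr_der _ _ hd _ x y xy.
rewrite /= !mul0r !addr0 => h.
have: 4^-1 * x - logloss' x <= 4^-1 * y - logloss' y.
  apply: h => s. set e := expR (- s).
  have e0 : 0 <= e by rewrite expR_ge0.
  have h1 : 0 < 1 + e by rewrite ltr_wpDr.
  rewrite subr_ge0 ler_pdivrMr ?exprn_gt0 //.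
  rewrite -subr_ge0 (_ : _ - _ = 4^-1 * (1 - e) ^+ 2); last by field.
  by rewrite mulr_ge0 ?sqr_ge0 // invr_ge0.
move=> h2. lra.
Qed.

Lemma ll_smooth (r s : R) : logloss s <= logloss r + logloss' r * (s - r) + (s - r) ^+ 2 / 8.
Proof.
have h := @min_der (fun t => (logloss' r - r / 4) * t + 8^-1 * (t * t) - logloss t)
   (fun s => (logloss' r - r / 4) + 8^-1 * (s + s) - logloss' s) r (d_G _ _).
have h2 := h _ _ s; clear h.
rewrite -subr_ge0 (_ : _ - _ = ((logloss' r - r / 4) * s + 8^-1 * (s * s) - logloss s) -
   ((logloss' r - r / 4) * r + 8^-1 * (r * r) - logloss r)); last by field.
rewrite subr_ge0; apply: h2.
- move=> x rx. have := l'_lip _ _ rx. lra.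
- move=> x rx. have := l'_lip _ _ rx. lra.
Qed.



End An.
Arguments ll_convex {R}.
Arguments ll_smooth {R}.
Section Alg.
Variable R : realType.
Variables m d : nat.
Implicit Types A B C : 'M[R]_(m, d).

Definition ip A B : R := \sum_(i < m) \sum_(j < d) A i j * B i j.

Lemma frob_innerE A B : frob_inner A B = ip A B.
Proof.
rewrite /frob_inner /ip /mxtrace.
under eq_bigr do rewrite mxE.
rewrite exchange_big /=.
by apply: eq_bigr => l _; apply: eq_bigr => j _; rewrite !mxE.
Qed.

Lemma frob_sq A : frob A ^+ 2 = ip A A.
Proof.
rewrite /frob sqr_sqrtr; last by apply: sumr_ge0 => i _; apply: sumr_ge0 => j _; apply: sqr_ge0.
by apply: eq_bigr => i _; apply: eq_bigr => j _; rewrite expr2.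
Qed.

Lemma ipC A B : ip A B = ip B A.
Proof. by apply: eq_bigr => i _; apply: eq_bigr => j _; rewrite mulrC. Qed.

Lemma ipDl A B C : ip (A + B) C = ip A C + ip B C.
Proof.
rewrite /ip -big_split; apply: eq_bigr => i _; rewrite -big_split; apply: eq_bigr => j _.
by rewrite mxE mulrDl.
Qed.

Lemma ipZl (c : R) A B : ip (c *: A) B = c * ip A B.
Proof.
rewrite /ip mulr_sumr; apply: eq_bigr => i _; rewrite mulr_sumr; apply: eq_bigr => j _.
by rewrite mxE mulrA.
Qed.

Lemma ipNl A B : ip (- A) B = - ip A B.
Proof. by rewrite -scaleN1r ipZl mulN1r. Qed.

Lemma ipBl A B C : ip (A - B) C = ip A C - ip B C.
Proof. by rewrite ipDl ipNl. Qed.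

Lemma ipBr A B C : ip A (B - C) = ip A B - ip A C.
Proof. by rewrite ipC ipBl ipC [ip C A]ipC. Qed.

Lemma ipZr (c : R) A B : ip A (c *: B) = c * ip A B.
Proof. by rewrite ipC ipZl ipC. Qed.

Lemma ip0l B : ip 0 B = 0.
Proof. by rewrite -(scale0r (0 : 'M[R]_(m,d))) ipZl mul0r. Qed.

Lemma ip_suml n (F : 'I_n -> 'M[R]_(m, d)) B : ip (\sum_(k < n) F k) B = \sum_(k < n) ip (F k) B.
Proof.
elim/big_rec2: _ => [|k x Y _ <-]; first exact: ip0l.
by rewrite ipDl.
Qed.

Lemma ip_ge0 A : 0 <= ip A A.
Proof. by apply: sumr_ge0 => i _; apply: sumr_ge0 => j _; rewrite -expr2 sqr_ge0. Qed.

Lemma ip_cs (r : R) A B : 0 < r -> ip A A <= r ^+ 2 -> ip A B ^+ 2 <= r ^+ 2 * ip B B.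
Proof.
move=> r0 hA.
set c := ip A B / r ^+ 2.
have h := ip_ge0 (c *: A - B).
rewrite !ipBl !ipBr !ipZl !ipZr [ip B A]ipC in h.
have r2 : 0 < r ^+ 2 by rewrite exprn_gt0.
have e : c * r ^+ 2 = ip A B by rewrite /c divfK // lt0r_neq0.
have hc : 0 <= c ^+ 2 by apply: sqr_ge0.
have h2 : c * (c * ip A A) <= c * (c * r ^+ 2) by rewrite mulrA [X in _ <= X]mulrA ler_wpM2l // -expr2.
rewrite -(ler_pM2r r2) -subr_ge0.
have -> : r ^+ 2 * ip B B * r ^+ 2 - ip A B ^+ 2 * r ^+ 2 =
   r ^+ 2 * r ^+ 2 * (ip B B - 2 * c * ip A B + c * (c * r ^+ 2)).
  rewrite -e. ring.
apply: mulr_ge0; first by rewrite mulr_ge0 // ltW.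
nra.
Qed.


Lemma ip_expand (c : R) A B : ip (A - c *: B) (A - c *: B) = ip A A - 2 * c * ip A B + c ^+ 2 * ip B B.
Proof. rewrite !ipBl !ipBr !ipZl !ipZr [ip B A]ipC. ring. Qed.

End Alg.
Arguments ip {R m d} A B.

Section Net.
Variable R : realType.
Variables m d : nat.
Variables (rho : R) (a : 'I_m -> R).

Lemma net_hom (x : 'cV[R]_d) (W : 'M[R]_(m, d)) : ip (net_grad rho a x W) W = net rho a x W.
Proof.
rewrite /ip /net mulr_sumr; apply: eq_bigr => j _.
under eq_bigr do rewrite mxE.
transitivity (rho / Num.sqrt m%:R * (a j * ((if 0 <= preact W x j then 1 else 0) * preact W x j))).
  rewrite /preact !mulr_sumr; apply: eq_bigr => l _; ring.
case: ifP => h; first by rewrite mul1r max_r.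
rewrite mul0r max_l //.
by move/negbT: h; rewrite -ltNge => /ltW.
Qed.

Lemma grad_norm (x : 'cV[R]_d) (W : 'M[R]_(m, d)) : frob x <= 1 -> (forall j, a j = 1 \/ a j = -1) -> (0 < m)%N -> 0 < rho ->
  ip (net_grad rho a x W) (net_grad rho a x W) <= rho ^+ 2.
Proof.
move=> hx ha m0 r0.
set c := rho / Num.sqrt m%:R.
set S := \sum_(l < d) x l ord0 ^+ 2.
have HS : S <= 1.
  have f0 : 0 <= frob x by rewrite /frob sqrtr_ge0.
  have : frob x ^+ 2 <= 1 by rewrite expr2; nra.
  rewrite frob_sq /ip /S => h; apply: le_trans h.
  by rewrite le_eqVlt; apply/orP; left; apply/eqP; apply: eq_bigr => l _; rewrite big_ord1 expr2.
have S0 : 0 <= S by apply: sumr_ge0 => l _; apply: sqr_ge0.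
apply: (@le_trans _ _ (\sum_(j < m) \sum_(l < d) c ^+ 2 * x l ord0 ^+ 2)).
  apply: ler_sum => j _; apply: ler_sum => l _; rewrite !mxE -/c.
  have hc : 0 <= c ^+ 2 * x l ord0 ^+ 2 by rewrite mulr_ge0 ?sqr_ge0.
  by case: (ha j) => ->; case: ifP => _; rewrite ?expr2 in hc *; nra.
under eq_bigr do rewrite -mulr_sumr -/S.
rewrite sumr_const card_ord -mulr_natl.
have hm : 0 < m%:R :> R by rewrite ltr0n.
have -> : c ^+ 2 = rho ^+ 2 / m%:R.
  by rewrite /c expr_div_n sqr_sqrtr // ltW.
rewrite mulrA mulrCA divff ?lt0r_neq0 // mulr1.
have r2 : 0 <= rho ^+ 2 by apply: sqr_ge0.
by rewrite -[X in _ <= X]mulr1 ler_wpM2l.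
Qed.

End Net.

Section Main.
Variable R : realType.
Variables (n m d : nat) (rho : R) (a : 'I_m -> R) (xs : 'I_n -> 'cV[R]_d) (ys : 'I_n -> R)
  (W0 : 'M[R]_(m, d)) (eta : R).
Hypotheses (n0 : (0 < n)%N) (m0 : (0 < m)%N) (r0 : 0 < rho)
  (ha : forall j, a j = 1 \/ a j = -1) (hx : forall k, frob (xs k) <= 1)
  (hy : forall k, ys k = 1 \/ ys k = -1) (e0 : 0 < eta) (e4 : eta <= 4 / rho ^+ 2).

Local Notation W i := (gd rho a xs ys eta W0 i).
Local Notation gk i k := (net_grad rho a (xs k) (W i)).
Local Notation g i := (emp_risk_grad rho a xs ys (W i)).
Local Notation G i V := (lin_risk rho a xs ys eta W0 i V).

Lemma lin_riskE i V : G i V = n%:R^-1 * \sum_(k < n) logloss (ys k * ip (gk i k) V).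
Proof. by rewrite /lin_risk; under eq_bigr do rewrite frob_innerE. Qed.

Lemma ip_grad (Wm V : 'M[R]_(m, d)) : ip (emp_risk_grad rho a xs ys Wm) V =
  n%:R^-1 * \sum_(k < n) (logloss' (ys k * net rho a (xs k) Wm) * ys k) * ip (net_grad rho a (xs k) Wm) V.
Proof.
rewrite /emp_risk_grad ipZl ip_suml; congr (_ * _); apply: eq_bigr => k _.
by rewrite ipZl.
Qed.

Lemma ninv0 : 0 <= n%:R^-1 :> R.
Proof. by rewrite invr_ge0 ler0n. Qed.

Lemma conv i Z : G i (W i) - ip (g i) (W i - Z) <= G i Z.
Proof.
rewrite !lin_riskE ip_grad -mulrBr; apply: ler_wpM2l; first exact: ninv0.
rewrite -sumrB; apply: ler_sum => k _.
rewrite ipBr -net_hom.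
have := ll_convex (ys k * ip (gk i k) (W i)) (ys k * ip (gk i k) Z).
set l := logloss' _. set u := ip _ (W i). set v := ip _ Z.
have -> : l * ys k * (u - v) = - (l * (ys k * v - ys k * u)) by ring.
lra.
Qed.

Lemma smooth i : G i (W i.+1) <= G i (W i) - eta * ip (g i) (g i) + rho ^+ 2 * eta ^+ 2 / 8 * ip (g i) (g i).
Proof.
have eW : W i.+1 = W i - eta *: g i by [].
set Q := ip (g i) (g i).
have key : forall k : 'I_n, logloss (ys k * ip (gk i k) (W i.+1)) <=
   logloss (ys k * ip (gk i k) (W i)) + (logloss' (ys k * net rho a (xs k) (W i)) * ys k) * ip (gk i k) (g i) * (- eta)
   + rho ^+ 2 * eta ^+ 2 / 8 * Q.
  move=> k.
  have hs := ll_smooth (ys k * ip (gk i k) (W i)) (ys k * ip (gk i k) (W i.+1)).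
  rewrite eW ipBr ipZr in hs *.
  rewrite -net_hom.
  have cs := @ip_cs _ _ _ _ (gk i k) (g i) r0 (@grad_norm _ _ _ _ _ _ (W i) (hx k) ha m0 r0).
  have y2 : ys k ^+ 2 = 1 by case: (hy k) => ->; rewrite ?sqrrN expr1n.
  set u := ip _ (W i) in hs *. set v := ip _ (g i) in hs cs *.
  set l := logloss' _ in hs *.
  rewrite (_ : (ys k * (u - eta * v) - ys k * u) = - eta * ys k * v) in hs; last by ring.
  have e : l * (- eta * ys k * v) = l * ys k * v * - eta by ring.
  rewrite e in hs.
  have h8 : (- eta * ys k * v) ^+ 2 / 8 <= rho ^+ 2 * eta ^+ 2 / 8 * Q.
    have -> : (- eta * ys k * v) ^+ 2 = eta ^+ 2 * v ^+ 2 by rewrite !exprMn sqrrN y2 mulr1.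
    rewrite -/Q in cs.
    have c2 : 0 <= rho ^+ 2 * Q - v ^+ 2 by rewrite subr_ge0.
    have := mulr_ge0 (sqr_ge0 eta) c2.
    lra.
  lra.
rewrite !lin_riskE.
apply: (@le_trans _ _ (n%:R^-1 * \sum_(k < n) (logloss (ys k * ip (gk i k) (W i)) +
   (logloss' (ys k * net rho a (xs k) (W i)) * ys k) * ip (gk i k) (g i) * (- eta)
   + rho ^+ 2 * eta ^+ 2 / 8 * Q))).
  by apply: ler_wpM2l; [exact: ninv0 | apply: ler_sum => k _; exact: key].
have hQ : Q = ip (g i) (g i) by [].
rewrite [in X in _ <= _ - _ * X + _]hQ ip_grad.
rewrite !big_split /= -mulr_suml sumr_const card_ord -[_ *+ n]mulr_natr.
have hn : n%:R != 0 :> R by rewrite pnatr_eq0 -lt0n.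
set A := \sum_(k < n) _. set B := \sum_(k < n) _.
rewrite le_eqVlt; apply/orP; left; apply/eqP. field; exact: hn.
Qed.

Lemma step i Z : frob (W i.+1 - Z) ^+ 2 + 2 * eta * G i (W i.+1) <= frob (W i - Z) ^+ 2 + 2 * eta * G i Z.
Proof.
have hs := smooth i.
have hc := conv i Z.
have eW : W i.+1 - Z = (W i - Z) - eta *: g i by rewrite /= addrAC.
rewrite !frob_sq eW ip_expand.
set X := ip (W i - Z) (W i - Z). set Y := ip (W i - Z) (g i). set Q := ip (g i) (g i).
rewrite -/Q in hs. rewrite [ip (g i) _]ipC -/Y in hc.
have Q0 : 0 <= Q by apply: ip_ge0.
have r2 : 0 < rho ^+ 2 by rewrite exprn_gt0.
have he : rho ^+ 2 * eta <= 4 by rewrite mulrC -ler_pdivlMr.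
have h1 : 0 <= eta ^+ 2 * Q * (4 - rho ^+ 2 * eta).
  by rewrite mulr_ge0 ?subr_ge0 // mulr_ge0 ?sqr_ge0.
have h2 : 2 * eta * G i (W i.+1) <= 2 * eta * (G i (W i) - eta * Q + rho ^+ 2 * eta ^+ 2 / 8 * Q).
  by rewrite ler_wpM2l // mulr_ge0 // ltW.
have h3 : 2 * eta * G i (W i) <= 2 * eta * (G i Z + Y).
  by apply: ler_wpM2l; [rewrite mulr_ge0 // ltW | lra].
nra.
Qed.

Lemma telescope Z t :
    frob (W t - Z) ^+ 2 + 2 * eta * \sum_(i < t) G i (W i.+1)
    <= frob (W0 - Z) ^+ 2 + 2 * eta * \sum_(i < t) G i Z.
Proof.
elim: t => [|t IH]; first by rewrite !big_ord0.
rewrite !big_ord_recr /=.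
have := step t Z.
rewrite /=. lra.
Qed.

End Main.

Theorem lemmaA10 (R : realType) (n m d : nat) (rho : R) (a : 'I_m -> R)
  (xs : 'I_n -> 'cV[R]_d) (ys : 'I_n -> R) (W0 : 'M[R]_(m, d)) (eta : R) :
  (0 < n)%N -> (0 < m)%N -> 0 < rho ->
  (forall j, a j = 1 \/ a j = -1) ->
  (forall k, frob (xs k) <= 1) ->
  (forall k, ys k = 1 \/ ys k = -1) ->
  0 < eta -> eta <= 4 / rho ^+ 2 ->
  forall (Z : 'M[R]_(m, d)) (t : nat),
    frob (gd rho a xs ys eta W0 t - Z) ^+ 2
      + 2 * eta * \sum_(i < t) lin_risk rho a xs ys eta W0 i (gd rho a xs ys eta W0 i.+1)
    <= frob (W0 - Z) ^+ 2
      + 2 * eta * \sum_(i < t) lin_risk rho a xs ys eta W0 i Z.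
Proof.
move=> n0 m0 r0 ha hx hy e0 e4 Z t.
exact: (@telescope R n m d rho a xs ys W0 eta n0 m0 r0 ha hx hy e0 e4 Z t).
Qed.
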